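(* Let $\Sigma$ be a finite alphabet. (1) For any $\lambda\in[0,1]$ there is a quantum automaton $\mathcal{A}$ over $\Sigma$ such that $f^{\mathrm{ND}}_{\mathcal{A}}(w)=\lambda$ for all $w\in\Sigma^\omega$. (2) For any quantum automaton $\mathcal{A}$ over $\Sigma$ and $\lambda\in[0,1]$ there is a quantum automaton $\mathcal{B}$ over $\Sigma$ with $f^{\mathrm{ND}}_{\mathcal{B}}(w)=\lambda f^{\mathrm{ND}}_{\mathcal{A}}(w)$ for all $w\in\Sigma^\omega$. (3) For any quantum automaton $\mathcal{A}$ over $\Sigma$ and $\lambda\in[0,1]$ there is a quantum automaton $\mathcal{B}$ over $\Sigma$ with $f^{\mathrm{ND}}_{\mathcal{B}}(w)=\lambda f^{\mathrm{ND}}_{\mathcal{A}}(w)+(1-\lambda)$ for all $w\in\Sigma^\omega$.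
   Context: A quantum automaton is a tuple $\mathcal{A}=(\mathcal{H},|s_0\rangle,\Sigma,\{U_\sigma:\sigma\in\Sigma\},F)$ where $\mathcal{H}$ is a finite-dimensional complex Hilbert space, $|s_0\rangle$ a unit vector, $\Sigma$ a finite alphabet, each $U_\sigma$ unitary, and $F$ a subspace. For $w=\sigma_1\sigma_2\cdots\in\Sigma^\omega$ the non-disturbing run is $|s_n\rangle=U_{\sigma_n}\cdots U_{\sigma_1}|s_0\rangle$ and $f^{\mathrm{ND}}_{\mathcal{A}}(w)=\sup_{|\psi\rangle}\sup_{\{n_i\}}\inf_{i\ge1}|\langle\psi|s_{n_i}\rangle|^2$ over unit $|\psi\rangle\in F$ and strictly increasing sequences $0\le n_1<n_2<\cdots$. *)

(* Defs.v *)
From HB Require Import structures.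
From mathcomp Require Import all_boot all_order all_algebra.
From mathcomp Require Import all_classical all_reals.
From mathcomp.real_closed Require Import complex.
Set Implicit Arguments. Unset Strict Implicit. Unset Printing Implicit Defensive.
Import Order.TTheory GRing.Theory Num.Theory.
Local Open Scope ring_scope.
Local Open Scope classical_set_scope.

Section QA.
Variable R : realType.
Local Notation C := (R[i]).

Definition sqmod (z : C) : R := (@complex.Re R z) ^+ 2 + (@complex.Im R z) ^+ 2.

Definition adjmx m n (A : 'M[C]_(m, n)) : 'M[C]_(n, m) := (map_mx (@conjc R) A)^T.

Definition inner d (psi s : 'cV[C]_d) : C := (adjmx psi *m s) 0 0.

Definition unit_vec d (s : 'cV[C]_d) : Prop := inner s s = 1.

Definition unitary d (U : 'M[C]_d) : Prop := adjmx U *m U = 1%:M.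

(* A quantum automaton (H = C^qdim, |s0>, Sigma, {U_sigma}, F);
   the subspace F is the row space of the matrix qF, i.e. a column vector
   psi lies in F iff (psi^T <= qF)%MS. *)
Record qaut (Sigma : finType) := QAut {
  qdim : nat;
  qs0 : 'cV[C]_qdim;
  qU : Sigma -> 'M[C]_qdim;
  qF : 'M[C]_qdim;
  qs0_unit : unit_vec qs0;
  qU_unitary : forall a, unitary (qU a)
}.

Definition in_subspace d (F : 'M[C]_d) (psi : 'cV[C]_d) : bool := (psi^T <= F)%MS.

(* infinite words w = sigma_1 sigma_2 ... are maps nat -> Sigma, w 0 = sigma_1 *)
Fixpoint run (Sigma : finType) (A : qaut Sigma) (w : nat -> Sigma) (n : nat)
  : 'cV[C]_(qdim A) :=
  match n with
  | 0 => qs0 A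
  | n'.+1 => qU A (w n') *m run A w n'
  end.

(* f^ND_A(w) = sup_{psi unit in F} sup_{n_1 < n_2 < ...} inf_{i >= 1} |<psi|s_{n_i}>|^2;
   the sequence (n_i)_{i>=1} is encoded as ns : nat -> nat with ns k = n_(k+1). *)
Definition fND (Sigma : finType) (A : qaut Sigma) (w : nat -> Sigma) : R :=
  sup [set x : R | exists (psi : 'cV[C]_(qdim A)) (ns : nat -> nat),
        [/\ unit_vec psi, in_subspace (qF A) psi,
            (forall k, (ns k < ns k.+1)%N) &
            x = inf [set sqmod (inner psi (run A w (ns k))) | k in [set: nat]]]].

End QA.

(* Main.v *)
Require Import Defs.
From HB Require Import structures.
From mathcomp Require Import all_boot all_order all_algebra.
From mathcomp Require Import all_classical all_reals.
From mathcomp.real_closed Require Import complex.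
From mathcomp Require Import ring lra.
Import Order.TTheory GRing.Theory Num.Theory.
Local Open Scope ring_scope.

Set Implicit Arguments. Unset Strict Implicit. Unset Printing Implicit Defensive.

Section Aux.
Local Open Scope complex_scope.
Local Open Scope ring_scope.
Variable R : realType.
Local Notation C := (R[i]).

Lemma innerE d (p s : 'cV[C]_d) : inner p s = \sum_i conjc (p i 0) * s i 0.
Proof. by rewrite /inner /adjmx !mxE; apply: eq_bigr => i _; rewrite !mxE. Qed.

Lemma innerC d (p s : 'cV[C]_d) : inner s p = conjc (inner p s).
Proof.
rewrite !innerE rmorph_sum; apply: eq_bigr => i _.
by rewrite rmorphM /= conjcK mulrC.
Qed.

Lemma innerDr d (p s t : 'cV[C]_d) : inner p (s + t) = inner p s + inner p t.
Proof. by rewrite !innerE -big_split; apply: eq_bigr => i _; rewrite mxE mulrDr. Qed.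

Lemma innerDl d (p q s : 'cV[C]_d) : inner (p + q) s = inner p s + inner q s.
Proof. by rewrite !innerE -big_split; apply: eq_bigr => i _; rewrite mxE rmorphD mulrDl. Qed.

Lemma innerZr d (p s : 'cV[C]_d) a : inner p (a *: s) = a * inner p s.
Proof. by rewrite !innerE mulr_sumr; apply: eq_bigr => i _; rewrite mxE mulrCA. Qed.

Lemma innerZl d (p s : 'cV[C]_d) a : inner (a *: p) s = conjc a * inner p s.
Proof. by rewrite !innerE mulr_sumr; apply: eq_bigr => i _; rewrite mxE rmorphM mulrA. Qed.

Lemma innerNl d (p s : 'cV[C]_d) : inner (- p) s = - inner p s.
Proof. by rewrite -scaleN1r innerZl rmorphN rmorph1 mulN1r. Qed.

Lemma inner_ge0 d (p : 'cV[C]_d) : 0 <= inner p p.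
Proof. rewrite innerE; apply: sumr_ge0 => i _; rewrite mulrC; exact: mulcJ_ge0. Qed.

Lemma inner_col d1 d2 (p s : 'cV[C]_d1) (q t : 'cV[C]_d2) :
  inner (col_mx p q) (col_mx s t) = inner p s + inner q t.
Proof.
rewrite !innerE big_split_ord /=; congr (_ + _); apply: eq_bigr => i _.
  by rewrite !col_mxEu.
by rewrite !col_mxEd.
Qed.

Lemma inner1 (p s : 'cV[C]_1) : inner p s = conjc (p 0 0) * s 0 0.
Proof. by rewrite innerE big_ord1. Qed.

Lemma sqmodE (z : C) : (sqmod z)%:C = z * conjc z.
Proof. by case: z => a b; rewrite /sqmod /=; apply/eqP; rewrite eq_complex /=; apply/andP; split; apply/eqP; ring. Qed.

Lemma sqmodM (x y : C) : sqmod (x * y) = sqmod x * sqmod y.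
Proof. by case: x => a b; case: y => c e; rewrite /sqmod /=; ring. Qed.

Lemma sqmod_ge0 (z : C) : 0 <= sqmod z.
Proof. by rewrite /sqmod addr_ge0 // sqr_ge0. Qed.

Lemma sqmodR (a : R) : sqmod a%:C = a ^+ 2.
Proof. by rewrite /sqmod /= expr0n addr0. Qed.


Lemma CS_lite d (p s : 'cV[C]_d) : inner s s = 1 ->
  (sqmod (inner s p))%:C <= inner p p.
Proof.
move=> ss; set c := inner s p.
have := inner_ge0 (p + (- c) *: s).
rewrite !innerDl !innerDr !innerZl !innerZr ss -/c (innerC s p) -/c mulr1.
rewrite sqmodE rmorphN /=.
have -> : inner p p + - c * conjc c + (- conjc c * c + - conjc c * (- c))
   = inner p p - c * conjc c by ring.
by rewrite subr_ge0.
Qed.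

Lemma sqmodJ (z : C) : sqmod (conjc z) = sqmod z.
Proof. by case: z => a b; rewrite /sqmod /= sqrrN. Qed.

Lemma CS_unit d (p s : 'cV[C]_d) : inner s s = 1 -> inner p p = 1 ->
  sqmod (inner p s) <= 1.
Proof.
move=> ss pp; have := CS_lite p ss; rewrite pp innerC sqmodJ.
by rewrite -[1 : C]/(1%:C) lecR.
Qed.

Lemma adjmxM m n k (A : 'M[C]_(m, n)) (B : 'M[C]_(n, k)) :
  adjmx (A *m B) = adjmx B *m adjmx A.
Proof. by rewrite /adjmx map_mxM trmx_mul. Qed.

Lemma inner_unitary d (U : 'M[C]_d) (x y : 'cV[C]_d) : unitary U ->
  inner (U *m x) (U *m y) = inner x y.
Proof.
by move=> hU; rewrite /inner adjmxM mulmxA -(mulmxA (adjmx x)) hU mulmx1.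
Qed.

Lemma run_unit (Sigma : finType) (A : qaut R Sigma) w n :
  inner (run A w n) (run A w n) = 1.
Proof.
elim: n => [|n IH] /=; first exact: qs0_unit.
by rewrite inner_unitary //; apply: qU_unitary.
Qed.


Local Open Scope classical_set_scope.

Lemma has_lb_range (f : nat -> R) : (forall k, 0 <= f k) ->
  has_lbound [set f k | k in [set: nat]].
Proof. by move=> f0; exists 0 => _ [k _ <-]. Qed.

Lemma inf_range_le (f : nat -> R) k : (forall k, 0 <= f k) ->
  inf [set f k | k in [set: nat]] <= f k.
Proof. by move=> f0; apply: (ge_inf (has_lb_range f0)); exists k. Qed.

Lemma inf_range_ge (f : nat -> R) y : (forall k, y <= f k) ->
  y <= inf [set f k | k in [set: nat]].
Proof. by move=> fy; apply: lb_le_inf; [exists (f 0%N), 0%N | move=> _ [k _ <-]]. Qed.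

Lemma inf_range_ge0 (f : nat -> R) : (forall k, 0 <= f k) ->
  0 <= inf [set f k | k in [set: nat]].
Proof. exact: inf_range_ge. Qed.

Lemma inf_affine (f g : nat -> R) (lam c : R) : 0 <= lam ->
  (forall k, 0 <= f k) -> (forall k, 0 <= g k) ->
  (forall k, g k <= lam * f k + c) ->
  inf [set g k | k in [set: nat]] <= lam * inf [set f k | k in [set: nat]] + c.
Proof.
move=> l0 f0 g0 gf; have [l00|lpos] := eqVneq lam 0.
  rewrite l00 mul0r add0r; have := gf 0%N; rewrite l00 mul0r add0r => h.
  exact: le_trans (inf_range_le 0%N g0) h.
have lgt : 0 < lam by rewrite lt_neqAle eq_sym lpos l0.
rewrite -lerBlDr -ler_pdivrMl //; apply: inf_range_ge => k.
rewrite ler_pdivrMl // lerBlDr; apply: le_trans (gf k); exact: inf_range_le.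
Qed.

Lemma inf_scale (f : nat -> R) (lam : R) : 0 <= lam -> (forall k, 0 <= f k) ->
  inf [set lam * f k | k in [set: nat]] = lam * inf [set f k | k in [set: nat]].
Proof.
move=> l0 f0; apply/le_anti/andP; split.
  by rewrite -[X in _ <= X]addr0; apply: inf_affine => // k; [rewrite mulr_ge0 | rewrite addr0].
apply: inf_range_ge => k; apply: ler_wpM2l => //; exact: inf_range_le.
Qed.

Lemma sup_scale (S : set R) lam : 0 <= lam ->
  sup [set lam * x | x in S] = lam * sup S.
Proof.
move=> l0; have [->|lpos] := eqVneq lam 0.
  rewrite mul0r; have [[x Sx]|S0] := pselect (S !=set0); last first.
    have -> : S = set0 by apply/seteqP; split => // y Sy; exfalso; apply: S0; exists y.
    by rewrite image_set0 sup0.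
  suff -> : [set 0 * x | x in S] = [set 0] by rewrite sup1.
  apply/seteqP; split => y /=; first by case=> z _ <-; rewrite mul0r.
  by move=> ->; exists x => //; rewrite mul0r.
have lgt : 0 < lam by rewrite lt_neqAle eq_sym lpos l0.
have [hs|hs] := pselect (has_sup S); last first.
  rewrite (sup_out hs) mulr0 sup_out // => -[[y0 [x Sx _]] [u ub]]; apply: hs.
  split; first by exists x.
  exists (u / lam) => y Sy; rewrite ler_pdivlMr // mulrC; apply: ub; by exists y.
have hi : has_sup [set lam * x | x in S].
  case: hs => [[x Sx] [u ub]]; split; first by exists (lam * x), x.
  by exists (lam * u) => _ [y Sy <-]; rewrite ler_wpM2l // ub.
apply/le_anti/andP; split.
  apply: ge_sup; first by case: hi.
  by move=> _ [y Sy <-]; rewrite ler_wpM2l //; apply: (ub_le_sup hs.2).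
rewrite mulrC -ler_pdivlMr //; apply: ge_sup; first by case: hs.
move=> y Sy; rewrite ler_pdivlMr // mulrC; apply: (ub_le_sup hi.2); by exists y.
Qed.


Lemma pigeon (P : nat -> Prop) (f : nat -> nat) M :
  (forall N, exists k, (N <= k)%N /\ P k) -> (forall k, P k -> (f k <= M)%N) ->
  exists j, forall N, exists k, [/\ (N <= k)%N, P k & f k = j].
Proof.
elim: M P => [|M IH] P hP hf.
  exists 0%N => N; have [k [Nk Pk]] := hP N; exists k; split => //.
  by apply/eqP; rewrite -leqn0 hf.
have [yes|no] := pselect (forall N, exists k, [/\ (N <= k)%N, P k & f k = M.+1]).
  by exists M.+1.
have [N0 hN0] : exists N0, forall k, (N0 <= k)%N -> P k -> f k <> M.+1.
  apply: contrapT => nex; apply: no => N; apply: contrapT => nk; apply: nex.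
  by exists N => k Nk Pk fk; apply: nk; exists k.
have h1 : forall N, exists k, (N <= k)%N /\ (P k /\ (N0 <= k)%N).
  move=> N; have [k [Nk Pk]] := hP (maxn N N0); exists k.
  by rewrite geq_max in Nk; case/andP: Nk => -> ->.
have h2 : forall k, P k /\ (N0 <= k)%N -> (f k <= M)%N.
  move=> k [Pk Nk]; have := hf k Pk; rewrite leq_eqVlt ltnS => /orP[/eqP e|//].
  by exfalso; apply: (hN0 k Nk Pk e).
have [j hj] := IH (fun k => P k /\ (N0 <= k)%N) h1 h2.
by exists j => N; have [k [Nk [Pk _] fk]] := hj N; exists k.
Qed.

Lemma infinite_seq (P : nat -> Prop) : (forall N, exists k, (N <= k)%N /\ P k) ->
  exists m : nat -> nat, (forall i, (m i < m i.+1)%N) /\ forall i, P (m i).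
Proof.
move=> hP; have [g hg] := choice hP.
exists (fun i => iter i (fun k => g k.+1) (g 0%N)); split.
  by move=> i /=; case: (hg (iter i (fun k => g k.+1) (g 0%N)).+1).
by case => [|i] /=; [case: (hg 0%N) | case: (hg (iter i (fun k => g k.+1) (g 0%N)).+1)].
Qed.

Lemma incr_comp (ns m : nat -> nat) : (forall k, (ns k < ns k.+1)%N) ->
  (forall k, (m k < m k.+1)%N) -> forall k, (ns (m k) < ns (m k.+1))%N.
Proof.
move=> hns hm k; have hom := @homo_ltn nat ns (fun a b => (a < b)%N) (fun y x z (h1 : (x < y)%N) h2 => ltn_trans h1 h2) hns.
by apply: hom; apply: hm.
Qed.


Lemma close_of_trunc (u v h : R) : 0 < h -> 0 <= (u + 1) / h -> 0 <= (v + 1) / h ->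
  Num.trunc ((u + 1) / h) = Num.trunc ((v + 1) / h) -> -h < u - v < h.
Proof.
move=> h0 hu hv e; have := truncn_itv hu; have := truncn_itv hv; rewrite e.
set t := ((Num.trunc _)%:R : R).
have eu : u = (u + 1) / h * h - 1 by rewrite divfK ?gt_eqF // addrK.
have ev : v = (v + 1) / h * h - 1 by rewrite divfK ?gt_eqF // addrK.
move: hu hv; set X := (u + 1) / h; set Y := (v + 1) / h.
move=> hu hv /andP[h1 h2] /andP[h3 h4]; rewrite eu ev.
have -> : X * h - 1 - (Y * h - 1) = (X - Y) * h by ring.
apply/andP; split; nra.
Qed.

Definition align_c (a0 b0 : R) :=
  let r := Num.sqrt (a0 ^+ 2 + b0 ^+ 2) in if r == 0 then 1 else a0 / r.
Definition align_d (a0 b0 : R) :=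
  let r := Num.sqrt (a0 ^+ 2 + b0 ^+ 2) in if r == 0 then 0 else b0 / r.

Lemma align_unit a0 b0 : align_c a0 b0 ^+ 2 + align_d a0 b0 ^+ 2 = 1.
Proof.
rewrite /align_c /align_d /=; set r := Num.sqrt _.
case: eqP => [_|rn0]; first by rewrite expr1n expr0n addr0.
have r2 : r ^+ 2 = a0 ^+ 2 + b0 ^+ 2 by rewrite sqr_sqrtr // addr_ge0 // sqr_ge0.
rewrite !expr_div_n -mulrDl -r2 divff // expf_neq0 //; exact/eqP.
Qed.

Lemma align_ineq (a b a0 b0 h : R) : 0 < h -> -h < a - a0 < h -> -h < b - b0 < h ->
  0 <= a * align_c a0 b0 + b * align_d a0 b0 + 4 * h /\
  a ^+ 2 + b ^+ 2 <= (a * align_c a0 b0 + b * align_d a0 b0 + 4 * h) ^+ 2.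
Proof.
move=> h0 /andP[ha1 ha2] /andP[hb1 hb2].
rewrite /align_c /align_d /=; set r := Num.sqrt _.
have r2 : r ^+ 2 = a0 ^+ 2 + b0 ^+ 2 by rewrite sqr_sqrtr // addr_ge0 // sqr_ge0.
have r0 : 0 <= r by apply: sqrtr_ge0.
case: eqP => [rz|rn0].
  have [a00 b00] : a0 = 0 /\ b0 = 0.
    move: r2; rewrite rz expr0n /= => /esym/eqP; rewrite paddr_eq0 ?sqr_ge0 //.
    by rewrite !sqrf_eq0 => /andP[/eqP -> /eqP ->].
  rewrite a00 b00 !subr0 in ha1 ha2 hb1 hb2; rewrite mulr1 mulr0 addr0.
  split; nra.
have rp : 0 < r by rewrite lt_neqAle eq_sym r0 andbT; apply/eqP.
set c := a0 / r; set d := b0 / r.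
have cr : c * r = a0 by rewrite /c divfK // gt_eqF.
have dr : d * r = b0 by rewrite /d divfK // gt_eqF.
have a0r : -r <= a0 <= r by apply/andP; split; nra.
have b0r : -r <= b0 <= r by apply/andP; split; nra.
case/andP: a0r => a0r1 a0r2; case/andP: b0r => b0r1 b0r2.
have e1 : - (h * r) <= (a - a0) * a0 <= h * r by apply/andP; split; nra.
have e2 : - (h * r) <= (b - b0) * b0 <= h * r by apply/andP; split; nra.
case/andP: e1 => e11 e12; case/andP: e2 => e21 e22.
have rho : (a * c + b * d) * r = r ^+ 2 + (a - a0) * a0 + (b - b0) * b0.
  by rewrite r2 -cr -dr; ring.
have rhog : r - 2 * h <= a * c + b * d.
  rewrite -(ler_pM2r rp) rho; nra.
have sq : a ^+ 2 + b ^+ 2 <= (r + 2 * h) ^+ 2.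
  have -> : a ^+ 2 + b ^+ 2 = r ^+ 2 + 2 * ((a - a0) * a0 + (b - b0) * b0) + (a - a0) ^+ 2 + (b - b0) ^+ 2.
    by rewrite r2; ring.
  nra.
split; first nra.
apply: (le_trans sq); nra.
Qed.


Lemma phase_align (a b : nat -> R) (h : R) : 0 < h ->
  (forall k, a k ^+ 2 + b k ^+ 2 <= 1) ->
  exists c d, c ^+ 2 + d ^+ 2 = 1 /\ forall N, exists k, (N <= k)%N /\
     (0 <= a k * c + b k * d + 4 * h /\
      a k ^+ 2 + b k ^+ 2 <= (a k * c + b k * d + 4 * h) ^+ 2).
Proof.
move=> h0 hab.
have ha k : -1 <= a k <= 1 by have hk := hab k; apply/andP; split; nra.
have hb k : -1 <= b k <= 1 by have hk := hab k; apply/andP; split; nra.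
have pa k : 0 <= (a k + 1) / h.
  by apply: divr_ge0; [case/andP: (ha k) => ? ?; lra | exact: ltW].
have pb k : 0 <= (b k + 1) / h.
  by apply: divr_ge0; [case/andP: (hb k) => ? ?; lra | exact: ltW].
set fa := fun k => Num.trunc ((a k + 1) / h).
set fb := fun k => Num.trunc ((b k + 1) / h).
have fab k : (fa k <= Num.trunc (2 / h))%N.
  apply: le_truncn; rewrite ler_pM2r ?invr_gt0 //; case/andP: (ha k) => ? ?; lra.
have fbb k : (fb k <= Num.trunc (2 / h))%N.
  apply: le_truncn; rewrite ler_pM2r ?invr_gt0 //; case/andP: (hb k) => ? ?; lra.
have [j1 hj1] := @pigeon (fun _ => True) fa _ (fun N => ex_intro _ N (conj (leqnn N) I)) (fun k _ => fab k).
have [j2 hj2] := @pigeon (fun k => fa k = j1) fb _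
   (fun N => let: ex_intro k (And3 Nk _ fk) := hj1 N in ex_intro _ k (conj Nk fk)) (fun k _ => fbb k).
have [k0 [_ fk0 gk0]] := hj2 0%N.
exists (align_c (a k0) (b k0)), (align_d (a k0) (b k0)); split; first exact: align_unit.
move=> N; have [k [Nk fk gk]] := hj2 N; exists k; split => //.
apply: align_ineq => //.
  by apply: close_of_trunc => //; rewrite -/(fa k) -/(fa k0) fk fk0.
by apply: close_of_trunc => //; rewrite -/(fb k) -/(fb k0) gk gk0.
Qed.


Lemma adjmx_block m1 m2 n1 n2 (A : 'M[C]_(m1, n1)) (B : 'M[C]_(m1, n2))
  (D : 'M[C]_(m2, n1)) (E : 'M[C]_(m2, n2)) :
  adjmx (block_mx A B D E) = block_mx (adjmx A) (adjmx D) (adjmx B) (adjmx E).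
Proof. by rewrite /adjmx map_block_mx tr_block_mx. Qed.

Lemma adjmx0 m n : adjmx (0 : 'M[C]_(m, n)) = 0.
Proof. by rewrite /adjmx map_mx0 trmx0. Qed.

Lemma adjmx1 n : adjmx (1%:M : 'M[C]_n) = 1%:M.
Proof. by rewrite /adjmx map_mx1 trmx1. Qed.

Lemma unitary_block d (U : 'M[C]_d) : unitary U ->
  unitary (block_mx U 0 0 (1%:M : 'M[C]_1)).
Proof.
rewrite /unitary => hU; rewrite adjmx_block !adjmx0 adjmx1 mulmx_block.
by rewrite !mulmx0 !mul0mx !addr0 !add0r hU mulmx1 -scalar_mx_block.
Qed.

Lemma row_block_sub m n (a : 'M[C]_(1, m)) (b : 'M[C]_(1, n)) (F : 'M[C]_m) (G : 'M[C]_n) :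
  (row_mx a b <= block_mx F 0 0 G)%MS <-> (a <= F)%MS /\ (b <= G)%MS.
Proof.
split.
  case/submxP => D e; move: e; rewrite -(hsubmxK D) mul_row_block !mulmx0 addr0 add0r.
  by case/eq_row_mx => -> ->; split; apply: submxMl.
case=> /submxP [D1 ->] /submxP [D2 ->]; apply/submxP; exists (row_mx D1 D2).
by rewrite mul_row_block !mulmx0 addr0 add0r.
Qed.

Lemma sqrt_sq (x : R) : 0 <= x -> (Num.sqrt x)%:C * (Num.sqrt x)%:C = x%:C.
Proof. by move=> x0; rewrite -rmorphM /= -expr2 sqr_sqrtr. Qed.

Lemma conjcR (x : R) : conjc (x%:C) = x%:C.
Proof. exact: conjc_real. Qed.


Variable Sigma : finType.

Definition ext_s0 (A : qaut R Sigma) (lam : R) : 'cV[C]_(qdim A + 1) :=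
  col_mx ((Num.sqrt lam)%:C *: qs0 A) (const_mx (Num.sqrt (1 - lam))%:C).

Lemma ext_s0_unit (A : qaut R Sigma) lam : 0 <= lam <= 1 -> unit_vec (ext_s0 A lam).
Proof.
case/andP=> l0 l1; rewrite /unit_vec /ext_s0 inner_col innerZl innerZr qs0_unit inner1 !mxE.
rewrite !conjcR mulr1 !sqrt_sq ?subr_ge0 // -rmorphD /=.
by have -> : lam + (1 - lam) = 1 by ring.
Qed.

Definition ext_aut (A : qaut R Sigma) (lam : R) (t : bool) (hl : 0 <= lam <= 1) : qaut R Sigma :=
  @QAut R Sigma (qdim A + 1) (ext_s0 A lam)
    (fun a => block_mx (qU A a) 0 0 1%:M)
    (block_mx (qF A) 0 0 (if t then 1%:M else 0))
    (ext_s0_unit A hl) (fun a => unitary_block (qU_unitary A a)).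

Lemma run_ext A lam t hl w n :
  run (@ext_aut A lam t hl) w n =
  col_mx ((Num.sqrt lam)%:C *: run A w n) (const_mx (Num.sqrt (1 - lam))%:C).
Proof.
elim: n => [|n IH] //=; rewrite IH mul_block_col !mul0mx addr0 add0r mul1mx.
by rewrite scalemxAr.
Qed.

Lemma mem_ext_inv A lam t hl (p : 'cV[C]_(qdim A)) (q : 'cV[C]_1) :
  in_subspace (qF (@ext_aut A lam t hl)) (col_mx p q) ->
  in_subspace (qF A) p /\ (t || (q == 0)).
Proof.
rewrite /in_subspace /= tr_col_mx => /row_block_sub [-> hq]; split => //.
case: t hq => //=; rewrite submx0 => /eqP e.
by rewrite -(trmxK q) e trmx0.
Qed.

Lemma mem_ext A lam t hl (p : 'cV[C]_(qdim A)) (q : 'cV[C]_1) :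
  in_subspace (qF A) p -> (t || (q == 0)) ->
  in_subspace (qF (@ext_aut A lam t hl)) (col_mx p q).
Proof.
rewrite /in_subspace /= tr_col_mx => hp hq; apply/row_block_sub; split => //.
by case: t hq => /=; [rewrite submx1 | move/eqP ->; rewrite trmx0 sub0mx].
Qed.

Lemma inner_ext A lam t hl w n (p : 'cV[C]_(qdim A)) (q : 'cV[C]_1) :
  inner (col_mx p q) (run (@ext_aut A lam t hl) w n) =
  (Num.sqrt lam)%:C * inner p (run A w n) + conjc (q 0 0) * (Num.sqrt (1 - lam))%:C.
Proof. by rewrite run_ext inner_col innerZr inner1 mxE. Qed.


Lemma key_ub (lam pr G z1 z2 g1 g2 sl sm : R) :
  0 <= lam <= 1 -> 0 <= pr <= 1 -> 0 <= G -> 0 <= sl -> 0 <= sm ->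
  sl ^+ 2 = lam -> sm ^+ 2 = 1 - lam ->
  z1 ^+ 2 + z2 ^+ 2 = pr * G -> g1 ^+ 2 + g2 ^+ 2 = 1 - pr ->
  (sl * z1 + sm * g1) ^+ 2 + (sl * z2 - sm * g2) ^+ 2 <= lam * G + (1 - lam).
Proof.
move=> /andP[l0 l1] /andP[p0 p1] G0 sl0 sm0 esl esm ez eg.
set dot := sl * sm * (z1 * g1 - z2 * g2).
have eL : (sl * z1 + sm * g1) ^+ 2 + (sl * z2 - sm * g2) ^+ 2
   = lam * (pr * G) + (1 - lam) * (1 - pr) + 2 * dot.
  by rewrite -esm -esl -eg -ez /dot; ring.
set a := lam * G * (1 - pr); set b := (1 - lam) * pr.
have a0 : 0 <= a by rewrite /a !mulr_ge0 // subr_ge0.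
have b0 : 0 <= b by rewrite /b !mulr_ge0 // subr_ge0.
have cs : (z1 * g1 - z2 * g2) ^+ 2 <= (z1 ^+ 2 + z2 ^+ 2) * (g1 ^+ 2 + g2 ^+ 2).
  have -> : (z1 ^+ 2 + z2 ^+ 2) * (g1 ^+ 2 + g2 ^+ 2)
     = (z1 * g1 - z2 * g2) ^+ 2 + (z1 * g2 + z2 * g1) ^+ 2 by ring.
  by rewrite lerDl sqr_ge0.
have dab : dot ^+ 2 <= a * b.
  have -> : a * b = sl ^+ 2 * sm ^+ 2 * ((z1 ^+ 2 + z2 ^+ 2) * (g1 ^+ 2 + g2 ^+ 2)).
    by rewrite esl esm ez eg /a /b; ring.
  rewrite /dot exprMn exprMn; apply: ler_wpM2l => //; exact: mulr_ge0 (sqr_ge0 _) (sqr_ge0 _).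
have h4 : (2 * dot) ^+ 2 <= (a + b) ^+ 2.
  have : 0 <= (a - b) ^+ 2 by apply: sqr_ge0.
  have -> : (2 * dot) ^+ 2 = 4 * dot ^+ 2 by ring.
  have -> : (a + b) ^+ 2 = (a - b) ^+ 2 + 4 * (a * b) by ring.
  lra.
have d2 : 2 * dot <= a + b.
  have [dn|dp] := leP (2 * dot) 0; first by apply: le_trans dn (addr_ge0 a0 b0).
  by rewrite -ler_sqr // nnegrE ?addr_ge0 // ltW.
rewrite eL; have -> : lam * G + (1 - lam) = lam * (pr * G) + (1 - lam) * (1 - pr) + (a + b).
  by rewrite /a /b; ring.
by rewrite lerD2l.
Qed.

Lemma key_lb (a b c d h x sx N A B : R) :
  0 < h -> 4 * h <= N -> N <= 1 -> 0 <= sx -> sx ^+ 2 = x ->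
  c ^+ 2 + d ^+ 2 = 1 -> 0 <= A -> A <= 1 -> 0 <= B -> A * sx + B = N ->
  x <= a ^+ 2 + b ^+ 2 -> 0 <= a * c + b * d + 4 * h ->
  a ^+ 2 + b ^+ 2 <= (a * c + b * d + 4 * h) ^+ 2 ->
  N ^+ 2 - 8 * h <= (A * a + B * c) ^+ 2 + (A * b + B * d) ^+ 2.
Proof.
move=> h0 hN N1 sx0 esx ecd A0 A1 B0 eN hx hr hr2.
set rho := a * c + b * d.
have rs : sx <= rho + 4 * h.
  have : sx ^+ 2 <= (rho + 4 * h) ^+ 2 by rewrite esx; apply: le_trans hx hr2.
  by rewrite ler_sqr // nnegrE.
have cs : (A * rho + B) ^+ 2 <= (A * a + B * c) ^+ 2 + (A * b + B * d) ^+ 2.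
  have -> : (A * rho + B) = c * (A * a + B * c) + d * (A * b + B * d).
    by rewrite /rho -[B in LHS]mulr1 -ecd; ring.
  set u := A * a + B * c; set v := A * b + B * d.
  have -> : u ^+ 2 + v ^+ 2 = (c * u + d * v) ^+ 2 + (c * v - d * u) ^+ 2.
    by rewrite -[u ^+ 2 + v ^+ 2]mul1r -ecd; ring.
  by rewrite lerDl sqr_ge0.
apply: le_trans cs.
have l1 : N - 4 * h * A <= A * rho + B.
  rewrite -eN; nra.
have l2 : 0 <= N - 4 * h * A by nra.
have N0 : 0 <= N by nra.
have : (N - 4 * h * A) ^+ 2 <= (A * rho + B) ^+ 2.
  by rewrite ler_sqr // nnegrE; apply: le_trans l1.
have AN : A * N <= 1 by nra.
have p1 : 0 <= h * (1 - A * N) by apply: mulr_ge0; lra.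
have p2 : 0 <= (h * A) ^+ 2 by apply: sqr_ge0.
apply: le_trans; nra.
Qed.


Definition SA (A : qaut R Sigma) (w : nat -> Sigma) := [set x : R | exists psi ns,
  [/\ unit_vec psi, in_subspace (qF A) psi, (forall k, (ns k < ns k.+1)%N) &
      x = inf [set sqmod (inner psi (run A w (ns k))) | k in [set: nat]]]].

Lemma fNDE (A : qaut R Sigma) w : fND A w = sup (SA A w). Proof. by []. Qed.

Lemma image_ext (f g : nat -> R) : (forall k, f k = g k) ->
  [set f k | k in [set: nat]] = [set g k | k in [set: nat]].
Proof. by move=> e; congr image; apply: funext. Qed.

Lemma val_bound (A : qaut R Sigma) w (psi : 'cV[C]_(qdim A)) n : unit_vec psi ->
  0 <= sqmod (inner psi (run A w n)) <= 1.
Proof. by move=> u; rewrite sqmod_ge0 CS_unit // run_unit. Qed.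

Lemma SA_bound (A : qaut R Sigma) w x : SA A w x -> 0 <= x <= 1.
Proof.
case=> psi [ns [u _ _ ->]]; apply/andP; split.
  by apply: inf_range_ge0 => k; case/andP: (val_bound w (ns k) u).
apply: le_trans (inf_range_le 0%N _) _.
  by move=> k; case/andP: (val_bound w (ns k) u).
by case/andP: (val_bound w (ns 0%N) u).
Qed.

Lemma SA_ub (A : qaut R Sigma) w : has_ubound (SA A w).
Proof. by exists 1 => x /SA_bound /andP[]. Qed.

Lemma SA_le (A : qaut R Sigma) w x : SA A w x -> x <= fND A w.
Proof. by move=> hx; apply: (ub_le_sup (SA_ub A w)). Qed.

Lemma fND_ge0 (A : qaut R Sigma) w : 0 <= fND A w.
Proof.
have [[x hx]|S0] := pselect (SA A w !=set0).
  by apply: le_trans (SA_le hx); case/andP: (SA_bound hx).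
rewrite fNDE; have -> : SA A w = set0.
  by apply/seteqP; split => // y Sy; exfalso; apply: S0; exists y.
by rewrite sup0.
Qed.

Lemma decomp (A : qaut R Sigma) lam t hl (psi : 'cV[C]_(qdim (@ext_aut A lam t hl))) :
  exists p q, psi = col_mx p q.
Proof.
by exists (usubmx (psi : 'cV[C]_(qdim A + 1))), (dsubmx (psi : 'cV[C]_(qdim A + 1))); rewrite vsubmxK.
Qed.

Lemma unit_col d (p : 'cV[C]_d) (q : 'cV[C]_1) :
  unit_vec (col_mx p q) <-> inner p p + conjc (q 0 0) * q 0 0 = 1.
Proof. by rewrite /unit_vec inner_col inner1. Qed.

Lemma part2 (A : qaut R Sigma) lam (hl : 0 <= lam <= 1) w :
  fND (@ext_aut A lam false hl) w = lam * fND A w.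
Proof.
have [l0 l1] := andP hl.
rewrite !fNDE -sup_scale //; congr sup.
apply/seteqP; split => y.
  case=> psi [ns [u m incr ey]].
  have [p [q e]] := decomp psi; subst psi.
  have [mp /eqP q0] := mem_ext_inv m; subst q.
  have up : unit_vec p.
    by move/unit_col: u; rewrite mxE rmorph0 mul0r addr0.
  exists (inf [set sqmod (inner p (run A w (ns k))) | k in [set: nat]]).
    by exists p, ns.
  rewrite ey -inf_scale //; last by move=> k; case/andP: (val_bound w (ns k) up).
  congr inf; apply: image_ext => k.
  by rewrite inner_ext mxE rmorph0 mul0r addr0 sqmodM sqmodR sqr_sqrtr.
case=> _ [psi [ns [u m incr ->]]] <-.
exists (col_mx psi 0), ns; split.
- by apply/unit_col; rewrite mxE rmorph0 mul0r addr0.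
- by apply: (@mem_ext A lam false hl psi 0 m); rewrite eqxx.
- by [].
rewrite -inf_scale //; last by move=> k; case/andP: (val_bound w (ns k) u).
congr inf; apply: image_ext => k.
by rewrite inner_ext mxE rmorph0 mul0r addr0 sqmodM sqmodR sqr_sqrtr.
Qed.


Lemma expand_ub (a b : R) (z g : C) :
  sqmod (a%:C * z + conjc g * b%:C) =
  (a * complex.Re z + b * complex.Re g) ^+ 2 + (a * complex.Im z - b * complex.Im g) ^+ 2.
Proof. by case: z => z1 z2; case: g => g1 g2; rewrite /sqmod /=; ring. Qed.

Lemma expand_lb (sl al be sm c d : R) (z : C) :
  sqmod (sl%:C * (al%:C * z) + conjc (be%:C * conjc (c +i* d)%C) * sm%:C) =
  ((sl * al) * complex.Re z + (be * sm) * c) ^+ 2 + ((sl * al) * complex.Im z + (be * sm) * d) ^+ 2.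
Proof. by case: z => z1 z2; rewrite /sqmod /=; ring. Qed.

Lemma ge0_real (z : C) : 0 <= z -> z = (complex.Re z)%:C /\ 0 <= complex.Re z.
Proof. by case: z => a b; rewrite lecE /= => /andP[/eqP -> ha]. Qed.


Lemma part3_ub (A : qaut R Sigma) lam (hl : 0 <= lam <= 1) w y :
  SA (@ext_aut A lam true hl) w y -> y <= lam * fND A w + (1 - lam).
Proof.
have [l0 l1] := andP hl.
case=> psi [ns [u m incr ey]].
have [p [q e]] := decomp psi; subst psi.
have [mp _] := mem_ext_inv m.
move/unit_col: u => u.
have [epp pr0] := ge0_real (inner_ge0 p).
set pr := complex.Re (inner p p) in epp pr0.
set g := q 0 0 in u.
have sgC : (sqmod g)%:C = 1 - pr%:C by rewrite sqmodE -epp -u; ring.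
have sg : sqmod g = 1 - pr by apply: complexI; rewrite sgC rmorphB rmorph1.
have pr1 : pr <= 1 by rewrite -subr_ge0 -sg sqmod_ge0.
have zb k : sqmod (inner p (run A w (ns k))) <= pr.
  by have := CS_lite p (run_unit A w (ns k)); rewrite epp innerC sqmodJ lecR.
have [G [G0 eG iG]] : exists G : nat -> R, [/\ forall k, 0 <= G k,
    forall k, sqmod (inner p (run A w (ns k))) = pr * G k &
    inf [set G k | k in [set: nat]] <= fND A w].
  have [pz|ppos] := eqVneq pr 0.
    exists (fun _ => 0); split => //.
    - move=> k; rewrite mulr0; apply/eqP; rewrite eq_le sqmod_ge0 andbT -pz; exact: zb.
    - apply: le_trans (inf_range_le 0%N (fun _ => lexx 0)) (fND_ge0 A w).
  have prp : 0 < pr by rewrite lt_neqAle eq_sym ppos pr0.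
  set s := Num.sqrt pr.
  have sp : 0 < s by rewrite sqrtr_gt0.
  have s2 : s ^+ 2 = pr by rewrite sqr_sqrtr.
  set ph := (s^-1)%:C *: p.
  have uph : unit_vec ph.
    rewrite /unit_vec /ph innerZl innerZr epp conjcR -!rmorphM /=.
    by rewrite mulrA -expr2 exprVn s2 mulVf // gt_eqF.
  have mph : in_subspace (qF A) ph by rewrite /in_subspace /ph linearZ /= scalemx_sub.
  exists (fun k => sqmod (inner ph (run A w (ns k)))); split.
  - by move=> k; exact: sqmod_ge0.
  - move=> k; rewrite /ph innerZl conjcR sqmodM sqmodR exprVn s2 mulrA mulfV ?gt_eqF // mul1r //.
  - by apply: SA_le; exists ph, ns.
rewrite ey; apply: le_trans (_ : _ <= lam * inf [set G k | k in [set: nat]] + (1 - lam)) _.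
  apply: inf_affine => // k; first exact: sqmod_ge0.
  rewrite inner_ext expand_ub.
  apply: (@key_ub lam pr (G k) _ _ _ _ _ _ hl _ (G0 k) (sqrtr_ge0 _) (sqrtr_ge0 _)).
  - by rewrite pr0 pr1.
  - exact: sqr_sqrtr.
  - by rewrite sqr_sqrtr // subr_ge0.
  - by rewrite -eG.
  - by rewrite -sg.
by rewrite lerD2r ler_wpM2l.
Qed.


Lemma inner0l d (s : 'cV[C]_d) : inner 0 s = 0.
Proof. by rewrite innerE big1 // => i _; rewrite mxE rmorph0 mul0r. Qed.

Lemma inf_const (c : R) : inf [set c | k in [set: nat]] = c.
Proof.
apply/le_anti/andP; split.
  have hb : has_lbound [set c | k in [set: nat]] by exists c => _ [k _ <-].
  by apply: (ge_inf hb); exists 0%N.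
by apply: (inf_range_ge (f := fun _ => c)).
Qed.

Lemma part3_one (A : qaut R Sigma) lam (hl : 0 <= lam <= 1) w :
  SA (@ext_aut A lam true hl) w (1 - lam).
Proof.
have [l0 l1] := andP hl.
exists (col_mx 0 (const_mx 1)), id; split.
- by apply/unit_col; rewrite inner0l mxE rmorph1 mul1r add0r.
- by apply: mem_ext => //; rewrite /in_subspace trmx0 sub0mx.
- by [].
rewrite -[LHS]inf_const; congr inf; apply: image_ext => k.
by rewrite inner_ext inner0l mulr0 add0r mxE rmorph1 mul1r sqmodR sqr_sqrtr // subr_ge0.
Qed.


Lemma part3_lb (A : qaut R Sigma) lam (hl : 0 <= lam <= 1) w x eps :
  SA A w x -> 0 < eps ->
  exists y, SA (@ext_aut A lam true hl) w y /\ lam * x + (1 - lam) - eps <= y.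
Proof.
move=> hx e0; have [l0 l1] := andP hl.
have [x0 x1] := andP (SA_bound hx).
case: hx => psi [ns [u m incr ex]].
set T0 := lam * x + (1 - lam).
have T01 : T0 <= 1 by rewrite /T0; nra.
have [Tle|Tgt] := leP T0 eps.
  exists (1 - lam); split; first exact: part3_one.
  by move: Tle; rewrite /T0; lra.
set N := Num.sqrt T0.
have T0p : 0 < T0 by apply: lt_trans Tgt.
have N2 : N ^+ 2 = T0 by rewrite sqr_sqrtr // ltW.
have Np : 0 < N by rewrite sqrtr_gt0.
have N1 : N <= 1 by nra.
have NT : T0 <= N by nra.
set h := eps / 8.
have h0 : 0 < h by rewrite /h divr_gt0.
have h4 : 4 * h <= N by rewrite /h; lra.
set wk := fun k => inner psi (run A w (ns k)).
have fk k : x <= sqmod (wk k).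
  rewrite ex; apply: inf_range_le => j; by case/andP: (val_bound w (ns j) u).
have [c [d [ecd hinf]]] := @phase_align (fun k => complex.Re (wk k)) (fun k => complex.Im (wk k)) h h0
   (fun k => proj2 (andP (val_bound w (ns k) u))).
have [m' [incr' hm']] := infinite_seq hinf.
set sx := Num.sqrt x; set sl := Num.sqrt lam; set sm := Num.sqrt (1 - lam).
have sx0 : 0 <= sx by apply: sqrtr_ge0.
have sx2 : sx ^+ 2 = x by rewrite sqr_sqrtr.
have sl0 : 0 <= sl by apply: sqrtr_ge0.
have sl2 : sl ^+ 2 = lam by rewrite sqr_sqrtr.
have sm0 : 0 <= sm by apply: sqrtr_ge0.
have sm2 : sm ^+ 2 = 1 - lam by rewrite sqr_sqrtr // subr_ge0.
set al := sl * sx / N; set be := sm / N.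
have ab1 : al ^+ 2 + be ^+ 2 = 1.
  rewrite /al /be !expr_div_n -mulrDl !exprMn sl2 sx2 sm2 -/T0 -N2 divff //.
  by rewrite expf_neq0 // gt_eqF.
set v := (c +i* d)%C.
exists (inf [set sqmod (inner (col_mx (al%:C *: psi) (const_mx (be%:C * conjc v)))
            (run (@ext_aut A lam true hl) w (ns (m' k)))) | k in [set: nat]]).
split.
  exists (col_mx (al%:C *: psi) (const_mx (be%:C * conjc v))), (fun k => ns (m' k)); split => //.
  - apply/unit_col; rewrite innerZl innerZr u mxE conjcR mulr1 /v.
    apply/eqP; rewrite eq_complex /=; apply/andP; split; apply/eqP.
      transitivity (al ^+ 2 + be ^+ 2 * (c ^+ 2 + d ^+ 2)); first ring.
      by rewrite ecd mulr1 ab1.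
    ring.
  - apply: mem_ext => //; by rewrite /in_subspace linearZ /= scalemx_sub.
  - exact: incr_comp.
apply: inf_range_ge => k.
have [hr1 hr2] := hm' k.
rewrite inner_ext innerZl conjcR mxE expand_lb -/sl -/sm.
have Aeq : sl * al = lam * sx / N by rewrite /al !mulrA -expr2 sl2.
have Beq : be * sm = (1 - lam) / N by rewrite /be mulrAC -expr2 sm2.
rewrite Aeq Beq.
rewrite -N2 -(_ : 8 * h = eps); last by rewrite /h; field.
apply: (key_lb h0 h4 N1 sx0 sx2 ecd) => //.
- by rewrite mulr_ge0 // ?invr_ge0 ?mulr_ge0 // ltW.
- rewrite ler_pdivrMr // mul1r.
  have q : (lam * sx) ^+ 2 <= N ^+ 2.
    rewrite exprMn sx2 N2 /T0.
    have : lam ^+ 2 * x <= lam * x by rewrite expr2 -mulrA ler_piMl // mulr_ge0.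
    lra.
  have q0 : 0 <= lam * sx by apply: mulr_ge0.
  nra.
- by rewrite mulr_ge0 // ?invr_ge0 ?subr_ge0 // ltW.
- have e : lam * sx ^+ 2 + (1 - lam) = N ^+ 2 by rewrite sx2 N2.
  have Nn0 : N != 0 by rewrite gt_eqF.
  transitivity ((lam * sx ^+ 2 + (1 - lam)) / N); first by field.
  by rewrite e expr2 mulfK.
- by have := fk (m' k); rewrite /sqmod.
Qed.


Lemma part3 (A : qaut R Sigma) lam (hl : 0 <= lam <= 1) w :
  fND (@ext_aut A lam true hl) w = lam * fND A w + (1 - lam).
Proof.
have [l0 l1] := andP hl.
rewrite [LHS]fNDE; apply/le_anti/andP; split.
  by apply: ge_sup; [exists (1 - lam); exact: part3_one | move=> y; exact: part3_ub].
have hub : has_ubound (SA (@ext_aut A lam true hl) w).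
  by exists (lam * fND A w + (1 - lam)) => y; exact: part3_ub.
apply/ler_addgt0Pr => e e0.
suff [y [hy hle]] : exists y, SA (@ext_aut A lam true hl) w y /\
    lam * fND A w + (1 - lam) - e <= y.
  have := ub_le_sup hub hy; lra.
have [[x hx]|S0] := pselect (SA A w !=set0); last first.
  have -> : fND A w = 0.
    rewrite fNDE; have -> : SA A w = set0.
      by apply/seteqP; split => // y Sy; exfalso; apply: S0; exists y.
    by rewrite sup0.
  exists (1 - lam); split; first exact: part3_one.
  lra.
have hs : has_sup (SA A w) by split; [exists x | exact: SA_ub].
have e2 : 0 < e / 2 by rewrite divr_gt0.
have [x' hx' lt] := sup_adherent e2 hs.
have [y [hy hle]] := part3_lb hl hx' e2.
exists y; split => //.
rewrite fNDE.
have : lam * sup (SA A w) <= lam * x' + e / 2.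
  have : sup (SA A w) <= x' + e / 2 by lra.
  move=> h; apply: le_trans (ler_wpM2l l0 h) _; rewrite mulrDr lerD2l.
  by rewrite ler_piMl // ltW.
lra.
Qed.


Lemma triv_unit : unit_vec (const_mx 1 : 'cV[C]_1).
Proof. by rewrite /unit_vec inner1 !mxE rmorph1 mulr1. Qed.

Lemma triv_unitary : unitary (1%:M : 'M[C]_1).
Proof. by rewrite /unitary adjmx1 mulmx1. Qed.

Definition triv_aut : qaut R Sigma :=
  @QAut R Sigma 1 (const_mx 1) (fun _ => 1%:M) 0 triv_unit (fun _ => triv_unitary).

Lemma triv_fND w : fND triv_aut w = 0.
Proof.
rewrite fNDE; have -> : SA triv_aut w = set0; last by rewrite sup0.
apply/seteqP; split => // y [psi [ns [u m _ _]]].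
move: m; rewrite /in_subspace /= submx0 trmx_eq0 => /eqP e.
by move: u; rewrite /unit_vec e inner0l => /esym/eqP; rewrite oner_eq0.
Qed.

End Aux.

Unset Implicit Arguments.

Theorem proposition4 (R : realType) (Sigma : finType) :
  (forall lam : R, 0 <= lam <= 1 ->
     exists A : qaut R Sigma, forall w : nat -> Sigma, fND A w = lam) /\
  (forall (A : qaut R Sigma) (lam : R), 0 <= lam <= 1 ->
     exists B : qaut R Sigma, forall w : nat -> Sigma, fND B w = lam * fND A w) /\
  (forall (A : qaut R Sigma) (lam : R), 0 <= lam <= 1 ->
     exists B : qaut R Sigma, forall w : nat -> Sigma,
       fND B w = lam * fND A w + (1 - lam)).
Proof.
split; last split.
- move=> lam /andP[l0 l1].
  have hl : 0 <= 1 - lam <= 1 by apply/andP; split; lra.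
  exists (@ext_aut R Sigma (triv_aut R Sigma) (1 - lam) true hl) => w.
  by rewrite part3 triv_fND mulr0 add0r opprB addrC subrK.
- by move=> A lam hl; exists (@ext_aut R Sigma A lam false hl) => w; apply: part2.
- by move=> A lam hl; exists (@ext_aut R Sigma A lam true hl) => w; apply: part3.
Qed.
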